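(* Let $\mathcal D$ be a preduoidal category and $T$ a separately opmonoidal monad on $\mathcal D$ equipped with an R-matrix $(R,\nu,\varpi,\iota)$. Then $\mathcal D^T$, with its lifted monoidal structures $(\circ,(\bot,T^\circ_0))$ and $(\bullet,(1,T^\bullet_0))$, is a duoidal category with structure morphisms $\nu,\varpi,\iota$ and interchange law $$\xi_{a,b,c,d} := ((\alpha\circ\gamma)\bullet(\beta\circ\delta))\cdot R_{a,b,c,d}\colon (a\bullet b)\circ(c\bullet d)\to(a\circ c)\bullet(b\circ d)$$ for all $T$-algebras $(a,\alpha),(b,\beta),(c,\gamma),(d,\delta)$. In particular each $\xi_{a,b,c,d}$ is a morphism of $T$-algebras.
   Context: Composition of morphisms is written $g\cdot f$ ($f$ first). A preduoidal category is a category $\mathcal D$ with two monoidal structures $(\circ,\bot)$ and $(\bullet,1)$ (associators $\alpha$, unitors $\lambda^\circ,\rho^\circ,\lambda^\bullet,\rho^\bullet$). A bimonad on a monoidal category $(\mathcal C,\otimes,I)$ is a monad $(B,\mu,\eta)$ with an opmonoidal structure $B_2\colon B(x\otimes y)\to Bx\otimes By$, $B_0\colon BI\to I$ such that $\mu,\eta$ are opmonoidal. A separately opmonoidal monad on $\mathcal D$ is a monad $(T,\mu,\eta)$ with a bimonad structure $(T^\circ_2,T^\circ_0)$ on $(\mathcal D,\circ,\bot)$ and one $(T^\bullet_2,T^\bullet_0)$ on $(\mathcal D,\bullet,1)$. Lifted monoidal structures on $\mathcal D^T$: $(a,\alpha)\circ(b,\beta)=(a\circ b,(\alpha\circ\beta)\cdot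 T^\circ_{2,a,b})$, unit $(\bot,T^\circ_0)$; $(a,\alpha)\bullet(b,\beta)=(a\bullet b,(\alpha\bullet\beta)\cdot T^\bullet_{2,a,b})$, unit $(1,T^\bullet_0)$. Duoidal category: a preduoidal category with a natural transformation $\zeta_{x,y,a,b}\colon (x\bullet y)\circ(a\bullet b)\to(x\circ a)\bullet(y\circ b)$ and morphisms $\nu\colon\bot\to\bot\bullet\bot$, $\varpi\colon 1\circ 1\to 1$, $\iota\colon\bot\to 1$ such that $(1,\varpi,\iota)$ is a monoid in $(\mathcal D,\circ,\bot)$, $(\bot,\nu,\iota)$ is a comonoid in $(\mathcal D,\bullet,1)$, and: (A1) $(\alpha\bullet\alpha)\cdot\zeta_{x\circ a,y\circ b,c,d}\cdot(\zeta_{x,y,a,b}\circ\mathrm{id}) = \zeta_{x,y,a\circ c,b\circ d}\cdot(\mathrm{id}\circ\zeta_{a,b,c,d})\cdot\alpha$; (A2) $\alpha\cdot(\zeta_{x,a,y,b}\bullet\mathrm{id})\cdot\zeta_{x\bullet a,c,y\bullet b,d} = (\mathrm{id}\bullet\zeta_{a,c,b,d})\cdot\zeta_{x,a\bullet c,y,b\bullet d}\cdot(\alpha\circ\alpha)$; (U) $\zeta_{\bot,\bot,a,b}\cdot(\nu\circ\mathrm{id})=((\lambda^\circ_a)^{-1}\bullet(\lambda^\circ_b)^{-1})\cdot\lambda^\circ_{a\bullet b}$, $\zeta_{a,b,\bot,\bot}\cdot(\mathrm{id}\circ\nu)=((\rho^\circ_a)^{-1}\bullet(\rho^\circ_b)^{-1})\cdot\rho^\circ_{a\bullet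 b}$, $(\varpi\bullet\mathrm{id})\cdot\zeta_{1,a,1,b}=(\lambda^\bullet_{a\circ b})^{-1}\cdot(\lambda^\bullet_a\circ\lambda^\bullet_b)$, $(\mathrm{id}\bullet\varpi)\cdot\zeta_{a,1,b,1}=(\rho^\bullet_{a\circ b})^{-1}\cdot(\rho^\bullet_a\circ\rho^\bullet_b)$. For $\mathcal D^T$ all data are required to be morphisms of $T$-algebras. R-matrix on $T$: a natural transformation $R_{a,b,c,d}\colon (a\bullet b)\circ(c\bullet d)\to(Ta\circ Tc)\bullet(Tb\circ Td)$ together with morphisms of $T$-algebras $\nu\colon(\bot,T^\circ_0)\to(\bot,T^\circ_0)\bullet(\bot,T^\circ_0)$, $\varpi\colon(1,T^\bullet_0)\circ(1,T^\bullet_0)\to(1,T^\bullet_0)$, $\iota\colon(\bot,T^\circ_0)\to(1,T^\bullet_0)$, such that $(1,\varpi,\iota)$ is a monoid in $(\mathcal D^T,\circ,\bot)$, $(\bot,\nu,\iota)$ is a comonoid in $(\mathcal D^T,\bullet,1)$, and (associators suppressed): (R-unit) for all $T$-algebras $(a,\alpha),(b,\beta)$: $((T^\circ_0\circ\alpha)\bullet(T^\circ_0\circ\beta))\cdot R_{\bot,\bot,a,b}\cdot(\nu\circ\mathrm{id})=((\lambda^\circ_a)^{-1}\bullet(\lambda^\circ_b)^{-1})\cdot\lambda^\circ_{a\bullet b}$; $((\alpha\circ T^\circ_0)\bullet(\beta\circ T^\circ_0))\cdot R_{a,b,\bot,\bot}\cdot(\mathrm{id}\circ\nu)=((\rho^\circ_a)^{-1}\bullet(\rho^\circ_b)^{-1})\cdot\rho^\circ_{a\bullet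 b}$; $(\varpi\bullet\mathrm{id})\cdot((T^\bullet_0\circ T^\bullet_0)\bullet(\alpha\circ\beta))\cdot R_{1,a,1,b}=(\lambda^\bullet_{a\circ b})^{-1}\cdot(\lambda^\bullet_a\circ\lambda^\bullet_b)$; $(\mathrm{id}\bullet\varpi)\cdot((\alpha\circ\beta)\bullet(T^\bullet_0\circ T^\bullet_0))\cdot R_{a,1,b,1}=(\rho^\bullet_{a\circ b})^{-1}\cdot(\rho^\bullet_a\circ\rho^\bullet_b)$. (R-lift) for all objects: $((\mu_a\circ\mu_c)\bullet(\mu_b\circ\mu_d))\cdot R_{Ta,Tb,Tc,Td}\cdot(T^\bullet_{2,a,b}\circ T^\bullet_{2,c,d})\cdot T^\circ_{2,a\bullet b,c\bullet d} = ((\mu_a\circ\mu_c)\bullet(\mu_b\circ\mu_d))\cdot(T^\circ_{2,Ta,Tc}\bullet T^\circ_{2,Tb,Td})\cdot T^\bullet_{2,Ta\circ Tc,Tb\circ Td}\cdot TR_{a,b,c,d}$. (R-1) for all objects: $((\mu_a\circ\mu_c\circ Tx)\bullet(\mu_b\circ\mu_d\circ Ty))\cdot((T^\circ_{2,Ta,Tc}\circ Tx)\bullet(T^\circ_{2,Tb,Td}\circ Ty))\cdot R_{Ta\circ Tc,Tb\circ Td,x,y}\cdot(R_{a,b,c,d}\circ\mathrm{id}) = ((Ta\circ\mu_c\circ\mu_x)\bullet(Tb\circ\mu_d\circ\mu_y))\cdot((Ta\circ T^\circ_{2,Tc,Tx})\bullet(Tb\circ T^\circ_{2,Td,Ty}))\cdot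 R_{a,b,Tc\circ Tx,Td\circ Ty}\cdot(\mathrm{id}\circ R_{c,d,x,y})$. (R-2) for all objects: $(((\mu_x\circ\mu_y)\bullet(\mu_a\circ\mu_b))\bullet\mathrm{id})\cdot(R_{Tx,Ta,Ty,Tb}\bullet\mathrm{id})\cdot((T^\bullet_{2,x,a}\circ T^\bullet_{2,y,b})\bullet\mathrm{id})\cdot R_{x\bullet a,c,y\bullet b,d} = (\mathrm{id}\bullet((\mu_a\circ\mu_b)\bullet(\mu_c\circ\mu_d)))\cdot(\mathrm{id}\bullet R_{Ta,Tc,Tb,Td})\cdot(\mathrm{id}\bullet(T^\bullet_{2,a,c}\circ T^\bullet_{2,b,d}))\cdot R_{x,a\bullet c,y,b\bullet d}\cdot(\alpha\circ\alpha)$. *)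

(* Defs.v *)
(* Composition is written  g · f  (f first), as in the paper. *)
Unset Implicit Arguments.

Record CatRaw := mkCat {
  ob : Type;
  hom : ob -> ob -> Type;
  idm : forall a : ob, hom a a;
  comp : forall a b c : ob, hom b c -> hom a b -> hom a c }.
Arguments hom c0 a b : clear implicits, rename.
Arguments idm c0 a : clear implicits, rename.
Arguments comp {c0 a b c} g f : rename.
Notation "g · f" := (comp g f) (at level 40, left associativity).

Record MonRaw (C : CatRaw) := mkMon {
  ten : ob C -> ob C -> ob C;
  tenm : forall a b c d, hom C a b -> hom C c d -> hom C (ten a c) (ten b d);
  unt : ob C;
  asc : forall x y z, hom C (ten (ten x y) z) (ten x (ten y z));
  asci : forall x y z, hom C (ten x (ten y z)) (ten (ten x y) z);
  lu : forall x, hom C (ten unt x) x;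
  lui : forall x, hom C x (ten unt x);
  ru : forall x, hom C (ten x unt) x;
  rui : forall x, hom C x (ten x unt) }.
Arguments ten {C} M x y : rename.
Arguments tenm {C} M {a b c d} f g : rename.
Arguments unt {C} M : rename.
Arguments asc {C} M x y z : rename.
Arguments asci {C} M x y z : rename.
Arguments lu {C} M x : rename.
Arguments lui {C} M x : rename.
Arguments ru {C} M x : rename.
Arguments rui {C} M x : rename.

(* Raw data of a preduoidal category: a category with two monoidal
   structures (∘,⊥) = pc and (•,1) = pb. *)
Record PDRaw := mkPD { pcat : CatRaw; pc : MonRaw pcat; pb : MonRaw pcat }.

(* The axioms are stated relative to a predicate O on objects and a
   predicate Mor on morphisms: the category in question has objects the x
   with O x and morphisms the f with Mor f.  For an ordinary category both
   predicates are trivially true; for the Eilenberg-Moore category D^T,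
   objects are pairs (a, α) satisfying the algebra laws and morphisms are
   the maps of D that are T-algebra morphisms (see [liftPD] below). *)
Definition MorPred (C : CatRaw) := forall a b, hom C a b -> Prop.
Definition allO (C : CatRaw) : ob C -> Prop := fun _ => True.
Definition allM (C : CatRaw) : MorPred C := fun _ _ _ => True.

Definition CatAx (C : CatRaw) (O : ob C -> Prop) (Mor : MorPred C) : Prop :=
  (forall a, O a -> Mor a a (idm C a)) /\
  (forall a b c (f : hom C a b) (g : hom C b c),
      O a -> O b -> O c -> Mor _ _ f -> Mor _ _ g -> Mor _ _ (g · f)) /\
  (forall a b c d (f : hom C a b) (g : hom C b c) (h : hom C c d),
      O a -> O b -> O c -> O d -> Mor _ _ f -> Mor _ _ g -> Mor _ _ h ->
      h · (g · f) = (h · g) · f) /\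
  (forall a b (f : hom C a b), O a -> O b -> Mor _ _ f ->
      idm C b · f = f /\ f · idm C a = f).

Definition MonAx (C : CatRaw) (M : MonRaw C) (O : ob C -> Prop) (Mor : MorPred C)
  : Prop :=
  O (unt M) /\
  (forall a b, O a -> O b -> O (ten M a b)) /\
  (forall a b c d (f : hom C a b) (g : hom C c d),
      O a -> O b -> O c -> O d -> Mor _ _ f -> Mor _ _ g -> Mor _ _ (tenm M f g)) /\
  (forall x y z, O x -> O y -> O z ->
      Mor _ _ (asc M x y z) /\ Mor _ _ (asci M x y z)) /\
  (forall x, O x ->
      Mor _ _ (lu M x) /\ Mor _ _ (lui M x) /\ Mor _ _ (ru M x) /\ Mor _ _ (rui M x)) /\
  (forall a b, O a -> O b -> tenm M (idm C a) (idm C b) = idm C (ten M a b)) /\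
  (forall a1 b1 c1 a2 b2 c2 (f1 : hom C a1 b1) (g1 : hom C b1 c1)
          (f2 : hom C a2 b2) (g2 : hom C b2 c2),
      O a1 -> O b1 -> O c1 -> O a2 -> O b2 -> O c2 ->
      Mor _ _ f1 -> Mor _ _ g1 -> Mor _ _ f2 -> Mor _ _ g2 ->
      tenm M (g1 · f1) (g2 · f2) = tenm M g1 g2 · tenm M f1 f2) /\
  (forall x x' y y' z z' (f : hom C x x') (g : hom C y y') (h : hom C z z'),
      O x -> O x' -> O y -> O y' -> O z -> O z' ->
      Mor _ _ f -> Mor _ _ g -> Mor _ _ h ->
      asc M x' y' z' · tenm M (tenm M f g) h = tenm M f (tenm M g h) · asc M x y z) /\
  (forall x x' (f : hom C x x'), O x -> O x' -> Mor _ _ f ->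
      lu M x' · tenm M (idm C (unt M)) f = f · lu M x /\
      ru M x' · tenm M f (idm C (unt M)) = f · ru M x) /\
  (forall x y z, O x -> O y -> O z ->
      asc M x y z · asci M x y z = idm C _ /\ asci M x y z · asc M x y z = idm C _) /\
  (forall x, O x ->
      lu M x · lui M x = idm C _ /\ lui M x · lu M x = idm C _ /\
      ru M x · rui M x = idm C _ /\ rui M x · ru M x = idm C _) /\
  (forall x y z w, O x -> O y -> O z -> O w ->
      asc M x y (ten M z w) · asc M (ten M x y) z w =
      tenm M (idm C x) (asc M y z w) · asc M x (ten M y z) w · tenm M (asc M x y z) (idm C w)) /\
  (forall x y, O x -> O y ->
      tenm M (idm C x) (lu M y) · asc M x (unt M) y = tenm M (ru M x) (idm C y)).

Arguments MonAx {C} M O Mor.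

Definition Preduoidal (P : PDRaw) (O : ob (pcat P) -> Prop) (Mor : MorPred (pcat P))
  : Prop :=
  CatAx (pcat P) O Mor /\ MonAx (pc P) O Mor /\ MonAx (pb P) O Mor.

Definition IsMonoid (C : CatRaw) (M : MonRaw C) (x : ob C)
    (m : hom C (ten M x x) x) (u : hom C (unt M) x) : Prop :=
  m · tenm M m (idm C x) = m · tenm M (idm C x) m · asc M x x x /\
  m · tenm M u (idm C x) = lu M x /\
  m · tenm M (idm C x) u = ru M x.

Definition IsComonoid (C : CatRaw) (M : MonRaw C) (x : ob C)
    (d : hom C x (ten M x x)) (e : hom C x (unt M)) : Prop :=
  asc M x x x · tenm M d (idm C x) · d = tenm M (idm C x) d · d /\
  tenm M e (idm C x) · d = lui M x /\
  tenm M (idm C x) e · d = rui M x.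

Arguments IsMonoid {C} M x m u.
Arguments IsComonoid {C} M x d e.

Section Duoidal.
Variables (P : PDRaw) (O : ob (pcat P) -> Prop) (Mor : MorPred (pcat P)).
Local Notation C := (pcat P).
Local Notation "x ⊗c y" := (ten (pc P) x y) (at level 33, left associativity).
Local Notation "x ⊗b y" := (ten (pb P) x y) (at level 33, left associativity).
Local Notation "f ⊙c g" := (tenm (pc P) f g) (at level 33, left associativity).
Local Notation "f ⊙b g" := (tenm (pb P) f g) (at level 33, left associativity).
Local Notation bot := (unt (pc P)).
Local Notation one := (unt (pb P)).
Local Notation id x := (idm C x).

Definition Duoidal
  (z : forall x y a b, hom C ((x ⊗b y) ⊗c (a ⊗b b)) ((x ⊗c a) ⊗b (y ⊗c b)))
  (nu : hom C bot (bot ⊗b bot)) (varpi : hom C (one ⊗c one) one)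
  (iota : hom C bot one) : Prop :=
  (forall x y a b, O x -> O y -> O a -> O b -> Mor _ _ (z x y a b)) /\
  Mor _ _ nu /\ Mor _ _ varpi /\ Mor _ _ iota /\
  (forall x x' y y' a a' b b' (f : hom C x x') (g : hom C y y')
          (h : hom C a a') (k : hom C b b'),
      O x -> O x' -> O y -> O y' -> O a -> O a' -> O b -> O b' ->
      Mor _ _ f -> Mor _ _ g -> Mor _ _ h -> Mor _ _ k ->
      z x' y' a' b' · ((f ⊙b g) ⊙c (h ⊙b k)) = ((f ⊙c h) ⊙b (g ⊙c k)) · z x y a b) /\
  IsMonoid (pc P) one varpi iota /\
  IsComonoid (pb P) bot nu iota /\
  (forall x y a b c d, O x -> O y -> O a -> O b -> O c -> O d ->
      (asc (pc P) x a c ⊙b asc (pc P) y b d) · z (x ⊗c a) (y ⊗c b) c d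
        · (z x y a b ⊙c id (c ⊗b d)) =
      z x y (a ⊗c c) (b ⊗c d) · (id (x ⊗b y) ⊙c z a b c d)
        · asc (pc P) (x ⊗b y) (a ⊗b b) (c ⊗b d)) /\
  (forall x y a b c d, O x -> O y -> O a -> O b -> O c -> O d ->
      asc (pb P) (x ⊗c y) (a ⊗c b) (c ⊗c d) · (z x a y b ⊙b id (c ⊗c d))
        · z (x ⊗b a) c (y ⊗b b) d =
      (id (x ⊗c y) ⊙b z a c b d) · z x (a ⊗b c) y (b ⊗b d)
        · (asc (pb P) x a c ⊙c asc (pb P) y b d)) /\
  (forall a b, O a -> O b ->
      z bot bot a b · (nu ⊙c id (a ⊗b b)) =
        (lui (pc P) a ⊙b lui (pc P) b) · lu (pc P) (a ⊗b b) /\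
      z a b bot bot · (id (a ⊗b b) ⊙c nu) =
        (rui (pc P) a ⊙b rui (pc P) b) · ru (pc P) (a ⊗b b) /\
      (varpi ⊙b id (a ⊗c b)) · z one a one b =
        lui (pb P) (a ⊗c b) · (lu (pb P) a ⊙c lu (pb P) b) /\
      (id (a ⊗c b) ⊙b varpi) · z a one b one =
        rui (pb P) (a ⊗c b) · (ru (pb P) a ⊙c ru (pb P) b)).
End Duoidal.

Record MonadRaw (C : CatRaw) := mkMonad {
  Tob : ob C -> ob C;
  Tm : forall a b, hom C a b -> hom C (Tob a) (Tob b);
  mu : forall a, hom C (Tob (Tob a)) (Tob a);
  eta : forall a, hom C a (Tob a) }.
Arguments Tob {C} T a : rename.
Arguments Tm {C} T {a b} f : rename.
Arguments mu {C} T a : rename.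
Arguments eta {C} T a : rename.

Definition MonadAx (C : CatRaw) (T : MonadRaw C) : Prop :=
  (forall a, Tm T (idm C a) = idm C (Tob T a)) /\
  (forall a b c (f : hom C a b) (g : hom C b c), Tm T (g · f) = Tm T g · Tm T f) /\
  (forall a b (f : hom C a b), mu T b · Tm T (Tm T f) = Tm T f · mu T a) /\
  (forall a b (f : hom C a b), eta T b · f = Tm T f · eta T a) /\
  (forall a, mu T a · Tm T (mu T a) = mu T a · mu T (Tob T a)) /\
  (forall a, mu T a · eta T (Tob T a) = idm C (Tob T a)) /\
  (forall a, mu T a · Tm T (eta T a) = idm C (Tob T a)).

Definition BimonadAx (C : CatRaw) (M : MonRaw C) (T : MonadRaw C)
    (T2 : forall x y, hom C (Tob T (ten M x y)) (ten M (Tob T x) (Tob T y)))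
    (T0 : hom C (Tob T (unt M)) (unt M)) : Prop :=
  (forall x x' y y' (f : hom C x x') (g : hom C y y'),
      T2 x' y' · Tm T (tenm M f g) = tenm M (Tm T f) (Tm T g) · T2 x y) /\
  (forall x y z,
      asc M (Tob T x) (Tob T y) (Tob T z) · tenm M (T2 x y) (idm C (Tob T z))
        · T2 (ten M x y) z =
      tenm M (idm C (Tob T x)) (T2 y z) · T2 x (ten M y z) · Tm T (asc M x y z)) /\
  (forall x,
      lu M (Tob T x) · tenm M T0 (idm C (Tob T x)) · T2 (unt M) x = Tm T (lu M x) /\
      ru M (Tob T x) · tenm M (idm C (Tob T x)) T0 · T2 x (unt M) = Tm T (ru M x)) /\
  (forall x y,
      T2 x y · mu T (ten M x y) =
      tenm M (mu T x) (mu T y) · T2 (Tob T x) (Tob T y) · Tm T (T2 x y)) /\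
  T0 · mu T (unt M) = T0 · Tm T T0 /\
  (forall x y, T2 x y · eta T (ten M x y) = tenm M (eta T x) (eta T y)) /\
  T0 · eta T (unt M) = idm C (unt M).

Arguments MonadAx {C} T.
Arguments BimonadAx {C} M T T2 T0.

Record SOMRaw (D : PDRaw) := mkSOM {
  Tmon : MonadRaw (pcat D);
  T2c : forall x y, hom (pcat D) (Tob Tmon (ten (pc D) x y))
                         (ten (pc D) (Tob Tmon x) (Tob Tmon y));
  T0c : hom (pcat D) (Tob Tmon (unt (pc D))) (unt (pc D));
  T2b : forall x y, hom (pcat D) (Tob Tmon (ten (pb D) x y))
                         (ten (pb D) (Tob Tmon x) (Tob Tmon y));
  T0b : hom (pcat D) (Tob Tmon (unt (pb D))) (unt (pb D)) }.
Arguments Tmon {D} S : rename.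
Arguments T2c {D} S x y : rename.
Arguments T0c {D} S : rename.
Arguments T2b {D} S x y : rename.
Arguments T0b {D} S : rename.

Definition SepOpmonoidalMonad (D : PDRaw) (S : SOMRaw D) : Prop :=
  MonadAx (Tmon S) /\
  BimonadAx (pc D) (Tmon S) (T2c S) (T0c S) /\
  BimonadAx (pb D) (Tmon S) (T2b S) (T0b S).

Section Lift.
Variables (D : PDRaw) (S : SOMRaw D).
Local Notation C := (pcat D).
Local Notation T := (Tmon S).

Definition AlgOb := { a : ob C & hom C (Tob T a) a }.

Definition isAlg (A : AlgOb) : Prop :=
  projT2 A · eta T (projT1 A) = idm C (projT1 A) /\
  projT2 A · Tm T (projT2 A) = projT2 A · mu T (projT1 A).

Definition AlgCat : CatRaw :=
  @mkCat AlgOb (fun A B => hom C (projT1 A) (projT1 B))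
    (fun A => idm C (projT1 A)) (fun A B E g f => g · f).

Definition isAlgMor : MorPred AlgCat :=
  fun A B f =>
    (f : hom C (projT1 A) (projT1 B)) · projT2 A =
    projT2 B · Tm T (f : hom C (projT1 A) (projT1 B)).

Definition liftMon (M : MonRaw C)
  (T2 : forall x y, hom C (Tob T (ten M x y)) (ten M (Tob T x) (Tob T y)))
  (T0 : hom C (Tob T (unt M)) (unt M)) : MonRaw AlgCat :=
  @mkMon AlgCat
    (fun A B => existT (fun a => hom C (Tob T a) a) (ten M (projT1 A) (projT1 B))
                         (tenm M (projT2 A) (projT2 B) · T2 (projT1 A) (projT1 B)))
    (fun A B E F f g => tenm M f g)
    (existT (fun a => hom C (Tob T a) a) (unt M) T0)
    (fun X Y Z => asc M (projT1 X) (projT1 Y) (projT1 Z))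
    (fun X Y Z => asci M (projT1 X) (projT1 Y) (projT1 Z))
    (fun X => lu M (projT1 X)) (fun X => lui M (projT1 X))
    (fun X => ru M (projT1 X)) (fun X => rui M (projT1 X)).

Definition liftPD : PDRaw :=
  @mkPD AlgCat (liftMon (pc D) (T2c S) (T0c S)) (liftMon (pb D) (T2b S) (T0b S)).
End Lift.

Section RMatrix.
Variables (D : PDRaw) (S : SOMRaw D).
Local Notation C := (pcat D).
Local Notation T := (Tob (Tmon S)).
Local Notation TT := (Tmon S).
Local Notation "x ⊗c y" := (ten (pc D) x y) (at level 33, left associativity).
Local Notation "x ⊗b y" := (ten (pb D) x y) (at level 33, left associativity).
Local Notation "f ⊙c g" := (tenm (pc D) f g) (at level 33, left associativity).
Local Notation "f ⊙b g" := (tenm (pb D) f g) (at level 33, left associativity).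
Local Notation bot := (unt (pc D)).
Local Notation one := (unt (pb D)).
Local Notation id x := (idm C x).
Local Notation DT := (liftPD D S).
Local Notation mu := (mu TT).

Definition RMatrix
  (R : forall a b c d, hom C ((a ⊗b b) ⊗c (c ⊗b d)) ((T a ⊗c T c) ⊗b (T b ⊗c T d)))
  (nu : hom C bot (bot ⊗b bot)) (varpi : hom C (one ⊗c one) one)
  (iota : hom C bot one) : Prop :=
  (forall a a' b b' c c' d d' (f : hom C a a') (g : hom C b b')
          (h : hom C c c') (k : hom C d d'),
      R a' b' c' d' · ((f ⊙b g) ⊙c (h ⊙b k)) =
      ((Tm TT f ⊙c Tm TT h) ⊙b (Tm TT g ⊙c Tm TT k)) · R a b c d) /\
  @isAlgMor D S (unt (pc DT)) (ten (pb DT) (unt (pc DT)) (unt (pc DT))) nu /\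
  @isAlgMor D S (ten (pc DT) (unt (pb DT)) (unt (pb DT))) (unt (pb DT)) varpi /\
  @isAlgMor D S (unt (pc DT)) (unt (pb DT)) iota /\
  IsMonoid (pc DT) (unt (pb DT)) varpi iota /\
  IsComonoid (pb DT) (unt (pc DT)) nu iota /\
  (forall A B : AlgOb D S, isAlg D S A -> isAlg D S B ->
     let a := projT1 A in let b := projT1 B in
     let al := projT2 A in let be := projT2 B in
      ((T0c S ⊙c al) ⊙b (T0c S ⊙c be)) · R bot bot a b · (nu ⊙c id (a ⊗b b)) =
        (lui (pc D) a ⊙b lui (pc D) b) · lu (pc D) (a ⊗b b) /\
      ((al ⊙c T0c S) ⊙b (be ⊙c T0c S)) · R a b bot bot · (id (a ⊗b b) ⊙c nu) =
        (rui (pc D) a ⊙b rui (pc D) b) · ru (pc D) (a ⊗b b) /\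
      (varpi ⊙b id (a ⊗c b)) · ((T0b S ⊙c T0b S) ⊙b (al ⊙c be)) · R one a one b =
        lui (pb D) (a ⊗c b) · (lu (pb D) a ⊙c lu (pb D) b) /\
      (id (a ⊗c b) ⊙b varpi) · ((al ⊙c be) ⊙b (T0b S ⊙c T0b S)) · R a one b one =
        rui (pb D) (a ⊗c b) · (ru (pb D) a ⊙c ru (pb D) b)) /\
  (forall a b c d,
      ((mu a ⊙c mu c) ⊙b (mu b ⊙c mu d)) · R (T a) (T b) (T c) (T d)
        · (T2b S a b ⊙c T2b S c d) · T2c S (a ⊗b b) (c ⊗b d) =
      ((mu a ⊙c mu c) ⊙b (mu b ⊙c mu d)) · (T2c S (T a) (T c) ⊙b T2c S (T b) (T d))
        · T2b S (T a ⊗c T c) (T b ⊗c T d) · Tm TT (R a b c d)) /\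
  (* (R-1), with the associators of ∘ inserted *)
  (forall a b c d x y,
      (asc (pc D) (T a) (T c) (T x) ⊙b asc (pc D) (T b) (T d) (T y))
        · (((mu a ⊙c mu c) ⊙c id (T x)) ⊙b ((mu b ⊙c mu d) ⊙c id (T y)))
        · ((T2c S (T a) (T c) ⊙c id (T x)) ⊙b (T2c S (T b) (T d) ⊙c id (T y)))
        · R (T a ⊗c T c) (T b ⊗c T d) x y
        · (R a b c d ⊙c id (x ⊗b y)) =
      ((id (T a) ⊙c (mu c ⊙c mu x)) ⊙b (id (T b) ⊙c (mu d ⊙c mu y)))
        · ((id (T a) ⊙c T2c S (T c) (T x)) ⊙b (id (T b) ⊙c T2c S (T d) (T y)))
        · R a b (T c ⊗c T x) (T d ⊗c T y)
        · (id (a ⊗b b) ⊙c R c d x y)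
        · asc (pc D) (a ⊗b b) (c ⊗b d) (x ⊗b y)) /\
  (* (R-2), with the associator of • inserted *)
  (forall x a c y b d,
      asc (pb D) (T x ⊗c T y) (T a ⊗c T b) (T c ⊗c T d)
        · (((mu x ⊙c mu y) ⊙b (mu a ⊙c mu b)) ⊙b id (T c ⊗c T d))
        · (R (T x) (T a) (T y) (T b) ⊙b id (T c ⊗c T d))
        · ((T2b S x a ⊙c T2b S y b) ⊙b id (T c ⊗c T d))
        · R (x ⊗b a) c (y ⊗b b) d =
      (id (T x ⊗c T y) ⊙b ((mu a ⊙c mu b) ⊙b (mu c ⊙c mu d)))
        · (id (T x ⊗c T y) ⊙b R (T a) (T c) (T b) (T d))
        · (id (T x ⊗c T y) ⊙b (T2b S a c ⊙c T2b S b d))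
        · R x (a ⊗b c) y (b ⊗b d)
        · (asc (pb D) x a c ⊙c asc (pb D) y b d)).

Definition xiR
  (R : forall a b c d, hom C ((a ⊗b b) ⊗c (c ⊗b d)) ((T a ⊗c T c) ⊗b (T b ⊗c T d)))
  (A B E F : AlgOb D S) :
  hom C ((projT1 A ⊗b projT1 B) ⊗c (projT1 E ⊗b projT1 F))
        ((projT1 A ⊗c projT1 E) ⊗b (projT1 B ⊗c projT1 F)) :=
  ((projT2 A ⊙c projT2 E) ⊙b (projT2 B ⊙c projT2 F))
    · R (projT1 A) (projT1 B) (projT1 E) (projT1 F).
End RMatrix.

(* Main.v *)
Require Import Defs.

Section CatL.
Variable C : CatRaw.
Hypothesis hC : CatAx C (allO C) (allM C).

Lemma cA a b c d (f : hom C a b) (g : hom C b c) (h : hom C c d) : h·(g·f) = h·g·f.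
Proof. destruct hC as (_&_&H&_). apply H; exact I. Qed.
Lemma idl a b (f : hom C a b) : idm C b · f = f.
Proof. destruct hC as (_&_&_&H). apply H; exact I. Qed.
Lemma idr a b (f : hom C a b) : f · idm C a = f.
Proof. destruct hC as (_&_&_&H). apply H; exact I. Qed.

Lemma ctx2 a b c (X1 : hom C b c) (X2 : hom C a b) (Y : hom C a c) :
  X1·X2 = Y -> forall z (k : hom C c z), k·X1·X2 = k·Y.
Proof. intros H z k. rewrite <- cA, H. reflexivity. Qed.
Lemma ctx3 a b c d (X1 : hom C c d) (X2 : hom C b c) (X3 : hom C a b) (Y : hom C a d) :
  X1·X2·X3 = Y -> forall z (k : hom C d z), k·X1·X2·X3 = k·Y.
Proof. intros H z k. rewrite <- !cA, <- H, !cA. reflexivity. Qed.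
Lemma ctx4 a b c d e (X1 : hom C d e) (X2 : hom C c d) (X3 : hom C b c) (X4 : hom C a b) (Y : hom C a e) :
  X1·X2·X3·X4 = Y -> forall z (k : hom C e z), k·X1·X2·X3·X4 = k·Y.
Proof. intros H z k. rewrite <- !cA, <- H, !cA. reflexivity. Qed.
Lemma ctx5 a b c d e f (X1 : hom C e f) (X2 : hom C d e) (X3 : hom C c d) (X4 : hom C b c) (X5 : hom C a b) (Y : hom C a f) :
  X1·X2·X3·X4·X5 = Y -> forall z (k : hom C f z), k·X1·X2·X3·X4·X5 = k·Y.
Proof. intros H z k. rewrite <- !cA, <- H, !cA. reflexivity. Qed.
Lemma ctx6 a b c d e f g (X1 : hom C f g) (X2 : hom C e f) (X3 : hom C d e) (X4 : hom C c d) (X5 : hom C b c) (X6 : hom C a b) (Y : hom C a g) :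
  X1·X2·X3·X4·X5·X6 = Y -> forall z (k : hom C g z), k·X1·X2·X3·X4·X5·X6 = k·Y.
Proof. intros H z k. rewrite <- !cA, <- H, !cA. reflexivity. Qed.
End CatL.
Arguments cA {C} hC {a b c d} f g h.
Arguments idl {C} hC {a b} f.
Arguments idr {C} hC {a b} f.

Ltac nrm hC := repeat rewrite (cA hC).
Ltac rw_ hC e := nrm hC; first [ rewrite (ctx2 _ hC _ _ _ _ _ _ e)
  | rewrite (ctx3 _ hC _ _ _ _ _ _ _ _ e)
  | rewrite (ctx4 _ hC _ _ _ _ _ _ _ _ _ _ e)
  | rewrite (ctx5 _ hC _ _ _ _ _ _ _ _ _ _ _ _ e)
  | rewrite (ctx6 _ hC _ _ _ _ _ _ _ _ _ _ _ _ _ _ e)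
  | rewrite e ]; nrm hC.
Tactic Notation "rw" constr(hC) uconstr(e) := rw_ hC e.

Section MonL.
Variable C : CatRaw.
Hypothesis hC : CatAx C (allO C) (allM C).
Variable M : MonRaw C.
Hypothesis hM : MonAx M (allO C) (allM C).

Lemma tid a b : tenm M (idm C a) (idm C b) = idm C (ten M a b).
Proof. destruct hM as (_&_&_&_&_&H&_). apply H; exact I. Qed.
Lemma tc a1 b1 c1 a2 b2 c2 (f1 : hom C a1 b1) (g1 : hom C b1 c1)
          (f2 : hom C a2 b2) (g2 : hom C b2 c2) :
  tenm M (g1 · f1) (g2 · f2) = tenm M g1 g2 · tenm M f1 f2.
Proof. destruct hM as (_&_&_&_&_&_&H&_). apply H; exact I. Qed.
Lemma anat x x' y y' z z' (f : hom C x x') (g : hom C y y') (h : hom C z z') :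
  asc M x' y' z' · tenm M (tenm M f g) h = tenm M f (tenm M g h) · asc M x y z.
Proof. destruct hM as (_&_&_&_&_&_&_&H&_). apply H; exact I. Qed.
Lemma lnat x x' (f : hom C x x') : lu M x' · tenm M (idm C (unt M)) f = f · lu M x.
Proof. destruct hM as (_&_&_&_&_&_&_&_&H&_). apply H; exact I. Qed.
Lemma rnat x x' (f : hom C x x') : ru M x' · tenm M f (idm C (unt M)) = f · ru M x.
Proof. destruct hM as (_&_&_&_&_&_&_&_&H&_). apply H; exact I. Qed.
Lemma ascK x y z : asc M x y z · asci M x y z = idm C _.
Proof. destruct hM as (_&_&_&_&_&_&_&_&_&H&_). apply H; exact I. Qed.
Lemma asciK x y z : asci M x y z · asc M x y z = idm C _.
Proof. destruct hM as (_&_&_&_&_&_&_&_&_&H&_). apply H; exact I. Qed.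
Lemma luK x : lu M x · lui M x = idm C _.
Proof. destruct hM as (_&_&_&_&_&_&_&_&_&_&H&_). apply H; exact I. Qed.
Lemma luiK x : lui M x · lu M x = idm C _.
Proof. destruct hM as (_&_&_&_&_&_&_&_&_&_&H&_). apply H; exact I. Qed.
Lemma ruK x : ru M x · rui M x = idm C _.
Proof. destruct hM as (_&_&_&_&_&_&_&_&_&_&H&_). apply H; exact I. Qed.
Lemma ruiK x : rui M x · ru M x = idm C _.
Proof. destruct hM as (_&_&_&_&_&_&_&_&_&_&H&_). apply H; exact I. Qed.
Lemma pent x y z w :
      asc M x y (ten M z w) · asc M (ten M x y) z w =
      tenm M (idm C x) (asc M y z w) · asc M x (ten M y z) w · tenm M (asc M x y z) (idm C w).
Proof. destruct hM as (_&_&_&_&_&_&_&_&_&_&_&H&_). apply H; exact I. Qed.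
Lemma tri x y :
      tenm M (idm C x) (lu M y) · asc M x (unt M) y = tenm M (ru M x) (idm C y).
Proof. destruct hM as (_&_&_&_&_&_&_&_&_&_&_&_&H). apply H; exact I. Qed.

Lemma tL a b c d (f : hom C a b) (g : hom C c d) :
  tenm M f g = tenm M f (idm C d) · tenm M (idm C a) g.
Proof. rewrite <- tc, idl, idr by exact hC. reflexivity. Qed.
Lemma tR a b c d (f : hom C a b) (g : hom C c d) :
  tenm M f g = tenm M (idm C b) g · tenm M f (idm C c).
Proof. rewrite <- tc, idl, idr by exact hC. reflexivity. Qed.
Lemma tcl a b c x y (f : hom C a b) (g : hom C b c) (h : hom C x y) :
  tenm M (g · f) h = tenm M g h · tenm M f (idm C x).
Proof. rewrite <- tc, idr by exact hC. reflexivity. Qed.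
Lemma tcr a b c x y (f : hom C a b) (g : hom C b c) (h : hom C x y) :
  tenm M h (g · f) = tenm M h g · tenm M (idm C x) f.
Proof. rewrite <- tc, idr by exact hC. reflexivity. Qed.
End MonL.
Arguments tcl {C} hC {M} hM {a b c x y} f g h.
Arguments tcr {C} hC {M} hM {a b c x y} f g h.

Section MonadL.
Variable C : CatRaw.
Variable T : MonadRaw C.
Hypothesis hT : MonadAx T.
Lemma Tid a : Tm T (idm C a) = idm C (Tob T a).
Proof. apply hT. Qed.
Lemma Tc a b c (f : hom C a b) (g : hom C b c) : Tm T (g · f) = Tm T g · Tm T f.
Proof. apply hT. Qed.
Lemma munat a b (f : hom C a b) : mu T b · Tm T (Tm T f) = Tm T f · mu T a.
Proof. apply hT. Qed.
Lemma etanat a b (f : hom C a b) : eta T b · f = Tm T f · eta T a.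
Proof. apply hT. Qed.
Lemma muA a : mu T a · Tm T (mu T a) = mu T a · mu T (Tob T a).
Proof. apply hT. Qed.
Lemma mueta a : mu T a · eta T (Tob T a) = idm C (Tob T a).
Proof. apply hT. Qed.
Lemma muTeta a : mu T a · Tm T (eta T a) = idm C (Tob T a).
Proof. apply hT. Qed.
End MonadL.

Section BiL.
Variable C : CatRaw.
Variable M : MonRaw C.
Variable T : MonadRaw C.
Variable T2 : forall x y, hom C (Tob T (ten M x y)) (ten M (Tob T x) (Tob T y)).
Variable T0 : hom C (Tob T (unt M)) (unt M).
Hypothesis hB : BimonadAx M T T2 T0.
Lemma T2nat x x' y y' (f : hom C x x') (g : hom C y y') :
      T2 x' y' · Tm T (tenm M f g) = tenm M (Tm T f) (Tm T g) · T2 x y.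
Proof. apply hB. Qed.
Lemma T2asc x y z :
      asc M (Tob T x) (Tob T y) (Tob T z) · tenm M (T2 x y) (idm C (Tob T z))
        · T2 (ten M x y) z =
      tenm M (idm C (Tob T x)) (T2 y z) · T2 x (ten M y z) · Tm T (asc M x y z).
Proof. apply hB. Qed.
Lemma T2lu x : lu M (Tob T x) · tenm M T0 (idm C (Tob T x)) · T2 (unt M) x = Tm T (lu M x).
Proof. apply hB. Qed.
Lemma T2ru x : ru M (Tob T x) · tenm M (idm C (Tob T x)) T0 · T2 x (unt M) = Tm T (ru M x).
Proof. apply hB. Qed.
Lemma T2mu x y : T2 x y · mu T (ten M x y) =
      tenm M (mu T x) (mu T y) · T2 (Tob T x) (Tob T y) · Tm T (T2 x y).
Proof. apply hB. Qed.
Lemma T0mu : T0 · mu T (unt M) = T0 · Tm T T0.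
Proof. apply hB. Qed.
Lemma T2eta x y : T2 x y · eta T (ten M x y) = tenm M (eta T x) (eta T y).
Proof. apply hB. Qed.
Lemma T0eta : T0 · eta T (unt M) = idm C (unt M).
Proof. apply hB. Qed.
End BiL.

Arguments tid {C M} hM a b.
Arguments tc {C M} hM {a1 b1 c1 a2 b2 c2} f1 g1 f2 g2.
Arguments anat {C M} hM {x x' y y' z z'} f g h.
Arguments lnat {C M} hM {x x'} f.
Arguments rnat {C M} hM {x x'} f.
Arguments ascK {C M} hM x y z.
Arguments asciK {C M} hM x y z.
Arguments luK {C M} hM x.
Arguments luiK {C M} hM x.
Arguments ruK {C M} hM x.
Arguments ruiK {C M} hM x.
Arguments pent {C M} hM x y z w.
Arguments tri {C M} hM x y.
Arguments tL {C} hC {M} hM {a b c d} f g.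
Arguments tR {C} hC {M} hM {a b c d} f g.
Arguments Tid {C T} hT a.
Arguments Tc {C T} hT {a b c} f g.
Arguments munat {C T} hT {a b} f.
Arguments etanat {C T} hT {a b} f.
Arguments muA {C T} hT a.
Arguments mueta {C T} hT a.
Arguments muTeta {C T} hT a.
Arguments T2nat {C M T T2 T0} hB {x x' y y'} f g.
Arguments T2asc {C M T T2 T0} hB x y z.
Arguments T2lu {C M T T2 T0} hB x.
Arguments T2ru {C M T T2 T0} hB x.
Arguments T2mu {C M T T2 T0} hB x y.
Arguments T0mu {C M T T2 T0} hB.
Arguments T2eta {C M T T2 T0} hB x y.
Arguments T0eta {C M T T2 T0} hB.
Section LiftL.
Variable D : PDRaw.
Hypothesis hD : Preduoidal D (allO (pcat D)) (allM (pcat D)).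
Variable S : SOMRaw D.
Hypothesis hS : SepOpmonoidalMonad D S.
Local Notation C := (pcat D).
Let hC : CatAx C (allO C) (allM C) := proj1 hD.
Local Notation T := (Tmon S).
Let hT : MonadAx T := proj1 hS.

Lemma lift_cat : CatAx (AlgCat D S) (isAlg D S) (isAlgMor D S).
Proof.
  unfold isAlgMor; repeat split; simpl.
  - intros [a al] _. simpl. rewrite (idl hC), (Tid hT), (idr hC). reflexivity.
  - intros [a al] [b be] [c ga] f g _ _ _ Hf Hg; simpl in *.
    rewrite (Tc hT). nrm hC. rewrite <- Hg. rewrite <- (cA hC), Hf, (cA hC). reflexivity.
  - intros. apply (cA hC).
  - intros. apply (idl hC).
  - intros. apply (idr hC).
Qed.
Lemma inv_mor (A B : AlgOb D S) (f : hom C (projT1 A) (projT1 B)) (g : hom C (projT1 B) (projT1 A)) :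
  isAlgMor D S A B f -> g · f = idm C _ -> f · g = idm C _ -> isAlgMor D S B A g.
Proof.
  unfold isAlgMor. intros Hf H1 H2.
  rewrite <- (idr hC (g · projT2 B)), <- (Tid hT), <- H2, (Tc hT). nrm hC.
  rewrite <- (cA hC _ _ g), <- Hf. nrm hC. rewrite H1, (idl hC). reflexivity.
Qed.

Section LM.
Variable M : MonRaw C.
Hypothesis hM : MonAx M (allO C) (allM C).
Variable T2 : forall x y, hom C (Tob T (ten M x y)) (ten M (Tob T x) (Tob T y)).
Variable T0 : hom C (Tob T (unt M)) (unt M).
Hypothesis hB : BimonadAx M T T2 T0.
Ltac sm := unfold isAlg, isAlgMor in *; cbn in *; cbn.
Lemma lift_mon : MonAx (liftMon D S M T2 T0) (isAlg D S) (isAlgMor D S).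
Proof.
  split. { split; sm. apply (T0eta hB). symmetry; apply (T0mu hB). }
  split. { intros [a al] [b be] [Ha1 Ha2] [Hb1 Hb2]. sm. split.
    - rewrite <- (cA hC), (T2eta hB), <- (tc hM), Ha1, Hb1. apply (tid hM).
    - rewrite (Tc hT). nrm hC. rw hC (T2nat hB _ _).
      rw hC (eq_sym (tc hM _ _ _ _)). rewrite Ha2, Hb2.
      rw hC (T2mu hB _ _). rw hC (eq_sym (tc hM _ _ _ _)).
      reflexivity. }
  split. { intros [a al] [b be] [c ga] [d de] f g _ _ _ _ Hf Hg. sm.
    rw hC (eq_sym (tc hM _ _ _ _)). rewrite Hf, Hg. rw hC (tc hM _ _ _ _).
    rw hC (T2nat hB _ _). reflexivity. }
  assert (Hasc : forall x y z : AlgOb D S, isAlgMor D S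
     (ten (liftMon D S M T2 T0) (ten (liftMon D S M T2 T0) x y) z)
     (ten (liftMon D S M T2 T0) x (ten (liftMon D S M T2 T0) y z))
     (asc (liftMon D S M T2 T0) x y z)).
  { intros [x al] [y be] [z ga]. sm.
    rewrite (tcl hC hM). rewrite (tcr hC hM). nrm hC.
    rw hC (anat hM _ _ _). rw hC (T2asc hB _ _ _). reflexivity. }
  assert (Hlu : forall x : AlgOb D S, isAlgMor D S
     (ten (liftMon D S M T2 T0) (unt (liftMon D S M T2 T0)) x) x (lu (liftMon D S M T2 T0) x)).
  { intros [x al]. sm. rewrite (tR hC hM T0 al). nrm hC. rw hC (lnat hM _).
    rw hC (T2lu hB _). reflexivity. }
  assert (Hru : forall x : AlgOb D S, isAlgMor D S
     (ten (liftMon D S M T2 T0) x (unt (liftMon D S M T2 T0))) x (ru (liftMon D S M T2 T0) x)).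
  { intros [x al]. sm. rewrite (tL hC hM al T0). nrm hC. rw hC (rnat hM _).
    rw hC (T2ru hB _). reflexivity. }
  split. { intros x y z _ _ _. split. apply Hasc.
    apply inv_mor with (f := asc M _ _ _). apply Hasc. apply (asciK hM). apply (ascK hM). }
  split. { intros x _. split; [|split; [|split]].
    - apply Hlu.
    - apply inv_mor with (f := lu M _). apply Hlu. apply (luiK hM). apply (luK hM).
    - apply Hru.
    - apply inv_mor with (f := ru M _). apply Hru. apply (ruiK hM). apply (ruK hM). }
  split. { intros; sm; apply (tid hM). }
  split. { intros; sm; apply (tc hM). }
  split. { intros; sm; apply (anat hM). }
  split. { intros; sm; split; [apply (lnat hM) | apply (rnat hM)]. }
  split. { intros; sm; split; [apply (ascK hM) | apply (asciK hM)]. }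
  split. { intros; sm; split; [|split; [|split]]; [apply (luK hM) | apply (luiK hM) | apply (ruK hM) | apply (ruiK hM)]. }
  split. { intros; sm; apply (pent hM). }
  { intros; sm; apply (tri hM). }
Qed.
End LM.
End LiftL.
Section Duo.
Variable D : PDRaw.
Hypothesis hD : Preduoidal D (allO (pcat D)) (allM (pcat D)).
Variable S : SOMRaw D.
Hypothesis hS : SepOpmonoidalMonad D S.
Local Notation C := (pcat D).
Local Notation T := (Tmon S).
Let hC : CatAx C (allO C) (allM C) := proj1 hD.
Let hT : MonadAx T := proj1 hS.
Let hMc : MonAx (pc D) (allO C) (allM C) := proj1 (proj2 hD).
Let hMb : MonAx (pb D) (allO C) (allM C) := proj2 (proj2 hD).
Let hBc : BimonadAx (pc D) T (T2c S) (T0c S) := proj1 (proj2 hS).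
Let hBb : BimonadAx (pb D) T (T2b S) (T0b S) := proj2 (proj2 hS).
Variable R : forall a b c d,
     hom (pcat D) (ten (pc D) (ten (pb D) a b) (ten (pb D) c d))
       (ten (pb D) (ten (pc D) (Tob (Tmon S) a) (Tob (Tmon S) c))
                   (ten (pc D) (Tob (Tmon S) b) (Tob (Tmon S) d))).
Variables (nu : hom (pcat D) (unt (pc D)) (ten (pb D) (unt (pc D)) (unt (pc D))))
  (varpi : hom (pcat D) (ten (pc D) (unt (pb D)) (unt (pb D))) (unt (pb D)))
  (iota : hom (pcat D) (unt (pc D)) (unt (pb D))).
Hypothesis hR : RMatrix D S R nu varpi iota.

Lemma Rnat a a' b b' c c' d d' (f : hom C a a') (g : hom C b b') (h : hom C c c') (k : hom C d d') :
      R a' b' c' d' · tenm (pc D) (tenm (pb D) f g) (tenm (pb D) h k) =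
      tenm (pb D) (tenm (pc D) (Tm T f) (Tm T h)) (tenm (pc D) (Tm T g) (Tm T k)) · R a b c d.
Proof. apply hR. Qed.
Lemma Rlift a b c d :
      tenm (pb D) (tenm (pc D) (mu T a) (mu T c)) (tenm (pc D) (mu T b) (mu T d)) · R (Tob T a) (Tob T b) (Tob T c) (Tob T d)
        · tenm (pc D) (T2b S a b) (T2b S c d) · T2c S (ten (pb D) a b) (ten (pb D) c d) =
      tenm (pb D) (tenm (pc D) (mu T a) (mu T c)) (tenm (pc D) (mu T b) (mu T d))
        · tenm (pb D) (T2c S (Tob T a) (Tob T c)) (T2c S (Tob T b) (Tob T d))
        · T2b S (ten (pc D) (Tob T a) (Tob T c)) (ten (pc D) (Tob T b) (Tob T d)) · Tm T (R a b c d).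
Proof. apply hR. Qed.

Ltac sm := unfold isAlg, isAlgMor in *; cbn in *; cbn.

Lemma xi_mor (X Y A B : AlgOb D S) : isAlg D S X -> isAlg D S Y -> isAlg D S A -> isAlg D S B ->
  isAlgMor D S (ten (pc (liftPD D S)) (ten (pb (liftPD D S)) X Y) (ten (pb (liftPD D S)) A B))
     (ten (pb (liftPD D S)) (ten (pc (liftPD D S)) X A) (ten (pc (liftPD D S)) Y B))
     (xiR D S R X Y A B).
Proof.
  destruct X as [x ch], Y as [y ps], A as [a al], B as [b be].
  intros [_ Hx] [_ Hy] [_ Ha] [_ Hb]. unfold xiR. sm.
  rw hC (tc hMc _ _ _ _). rw hC (Rnat _ _ _ _ _ _ _ _ _ _ _ _).
  rw hC (eq_sym (tc hMb _ _ _ _)). rewrite <- !(tc hMc). rewrite Hx, Hy, Ha, Hb.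
  rewrite !(tc hMc). rewrite (tc hMb (tenm (pc D) _ _) _ (tenm (pc D) _ _)). rw hC (Rlift _ _ _ _).
  rewrite (Tc hT). rewrite (tc hMb (T2c S _ _)). rw hC (T2nat hBb _ _).
  rw hC (eq_sym (tc hMb (Tm T (tenm (pc D) ch al)) (T2c S x a) _ _)).
  rewrite !(T2nat hBc). rewrite (tc hMb (T2c S _ _)).
  assert (E : tenm (pb D) (tenm (pc D) ch al) (tenm (pc D) ps be)
    · tenm (pb D) (tenm (pc D) (Tm T ch) (Tm T al)) (tenm (pc D) (Tm T ps) (Tm T be)) =
    tenm (pb D) (tenm (pc D) ch al) (tenm (pc D) ps be)
  · tenm (pb D) (tenm (pc D) (mu T x) (mu T a)) (tenm (pc D) (mu T y) (mu T b))).
  { rewrite <- !(tc hMb), <- !(tc hMc), Hx, Hy, Ha, Hb. reflexivity. }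
  rw hC E. reflexivity.
Qed.

Lemma duo : Duoidal (liftPD D S) (isAlg D S) (isAlgMor D S) (xiR D S R) nu varpi iota.
Proof.
  destruct hR as (HRn & Hnu & Hvp & Hio & Hmon & Hcom & HRu & HRl & HR1 & HR2).
  split. { intros; apply xi_mor; assumption. }
  split. exact Hnu. split. exact Hvp. split. exact Hio.
  split. { intros [x ch] [x' ch'] [y ps] [y' ps'] [a al] [a' al'] [b be] [b' be'] f g h k.
    intros _ _ _ _ _ _ _ _ Hf Hg Hh Hk. unfold xiR. sm.
    rw hC (Rnat _ _ _ _ _ _ _ _ _ _ _ _). rewrite <- !(tc hMb), <- !(tc hMc), <- Hf, <- Hg, <- Hh, <- Hk. reflexivity. }
  split. exact Hmon. split. exact Hcom.
  split. { intros [x ch] [y ps] [a al] [b be] [c ga] [d de] [_ Hx] [_ Hy] [_ Ha] [_ Hb] [_ Hc] [_ Hd]. unfold xiR. sm.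
    etransitivity.
    { rewrite (tcl hC hMc (R x y a b)). rewrite <- (tid hMb c d). rw hC (Rnat _ _ _ _ _ _ _ _ _ _ _ _). rewrite !(Tid hT).
      rw hC (eq_sym (tc hMb _ _ _ _)). rewrite <- !(tc hMc). rewrite !(idr hC). do 2 rw hC (T2nat hBc _ _).
      rewrite <- (tc hMc _ ch _ al), <- (tc hMc _ ps _ be), Hx, Ha, Hy, Hb, !(tc hMc (mu T _) _ (mu T _)).
      rewrite !(tcl hC hMc). nrm hC. rewrite !(tc hMb). rewrite (tid hMb c d). nrm hC.
      rewrite <- (tc hMb _ (asc _ _ _ _)). rewrite !(anat hMc). rewrite (tc hMb _ _ (asc _ _ _ _)). nrm hC.
      rw hC (HR1 _ _ _ _ _ _). reflexivity. }
    symmetry. etransitivity.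
    { rewrite (tcr hC hMc (R a b c d)). rewrite <- (tid hMb x y). rw hC (Rnat _ _ _ _ _ _ _ _ _ _ _ _). rewrite !(Tid hT).
      rw hC (eq_sym (tc hMb _ _ _ _)). rewrite <- !(tc hMc). rewrite !(idr hC). do 2 rw hC (T2nat hBc _ _).
      rewrite <- (tc hMc _ al _ ga), <- (tc hMc _ be _ de), Hc, Ha, Hd, Hb, !(tc hMc (mu T _) _ (mu T _)).
      rewrite !(tcr hC hMc). nrm hC. rewrite !(tc hMb). rewrite (tid hMb x y). nrm hC. reflexivity. }
    reflexivity. }
  split. { intros [x ch] [y ps] [a al] [b be] [c ga] [d de] [_ Hx] [_ Hy] [_ Ha] [_ Hb] [_ Hc] [_ Hd]. unfold xiR. sm.
    etransitivity.
    { rewrite (tc hMc (T2b S x a) _ (T2b S y b) _).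
      rewrite (tcl hC hMb (tenm (pc D) (T2b S x a) (T2b S y b))). nrm hC.
      rw hC (eq_sym (tc hMb (tenm (pc D) (tenm (pb D) ch al) (tenm (pb D) ps be)) _ (tenm (pc D) ga de) _)). rw hC (Rnat _ _ _ _ _ _ _ _ _ _ _ _). rewrite (idl hC).
      rewrite <- (tc hMb (tenm (pc D) (Tm T ch) (Tm T ps))).
      rewrite <- (tc hMc _ ch _ ps), <- (tc hMc _ al _ be), Hx, Hy, Ha, Hb, !(tc hMc (mu T _) _ (mu T _)).
      rewrite (tc hMb (tenm (pc D) (mu T x) (mu T y))).
      rewrite (tcl hC hMb (R (Tob T x) _ _ _)). rewrite (tcl hC hMb (tenm (pb D) (tenm (pc D) (mu T x) _) _)).
      nrm hC. rw hC (anat hMb _ _ _). rw hC (HR2 _ _ _ _ _ _). reflexivity. }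
    symmetry. etransitivity.
    { rewrite (tc hMc (T2b S a c) _ (T2b S b d) _).
      rewrite (tcr hC hMb (tenm (pc D) (T2b S a c) (T2b S b d))). nrm hC.
      rewrite <- (tc hMb (tenm (pc D) ch ps) _ (tenm (pc D) (tenm (pb D) al ga) (tenm (pb D) be de)) _).
      rewrite (idl hC). rw hC (Rnat _ _ _ _ _ _ _ _ _ _ _ _).
      rewrite <- (tc hMb (tenm (pc D) (Tm T al) (Tm T be))).
      rewrite <- (tc hMc _ al _ be), <- (tc hMc _ ga _ de), Hc, Hd, Ha, Hb, !(tc hMc (mu T _) _ (mu T _)).
      rewrite (tc hMb (tenm (pc D) (mu T a) (mu T b))).
      rewrite !(tcr hC hMb). nrm hC. reflexivity. }
    reflexivity. }
  { intros [a al] [b be] Ha Hb. unfold xiR. sm.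
    pose proof (HRu (existT (fun z => hom C (Tob T z) z) a al) (existT (fun z => hom C (Tob T z) z) b be) Ha Hb) as H. cbn in H.
    repeat rewrite (cA hC) in H. nrm hC. exact H. }
Qed.
End Duo.

Theorem mainTheorem2 (D : PDRaw)
  (hD : Preduoidal D (allO (pcat D)) (allM (pcat D)))
  (S : SOMRaw D) (hS : SepOpmonoidalMonad D S)
  (R : forall a b c d,
     hom (pcat D) (ten (pc D) (ten (pb D) a b) (ten (pb D) c d))
       (ten (pb D) (ten (pc D) (Tob (Tmon S) a) (Tob (Tmon S) c))
                   (ten (pc D) (Tob (Tmon S) b) (Tob (Tmon S) d))))
  (nu : hom (pcat D) (unt (pc D)) (ten (pb D) (unt (pc D)) (unt (pc D))))
  (varpi : hom (pcat D) (ten (pc D) (unt (pb D)) (unt (pb D))) (unt (pb D)))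
  (iota : hom (pcat D) (unt (pc D)) (unt (pb D)))
  (hR : RMatrix D S R nu varpi iota) :
  Preduoidal (liftPD D S) (isAlg D S) (isAlgMor D S) /\
  Duoidal (liftPD D S) (isAlg D S) (isAlgMor D S) (xiR D S R) nu varpi iota.
Proof.
  split.
  - split; [| split].
    + exact (lift_cat D hD S hS).
    + exact (lift_mon D hD S hS (pc D) (proj1 (proj2 hD)) (T2c S) (T0c S) (proj1 (proj2 hS))).
    + exact (lift_mon D hD S hS (pb D) (proj2 (proj2 hD)) (T2b S) (T0b S) (proj2 (proj2 hS))).
  - exact (duo D hD S hS R nu varpi iota hR).
Qed.
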